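(* Let $T$ be a linear operator bounded on $L^2(\mathbb R^n)$ with kernel $K$ (locally integrable on $\mathbb R^{2n}$ off the diagonal) such that $Tg(x)=\int K(x,y)g(y)\,dy$ for $x$ outside the support of a compactly supported $g\in L^2$, and such that: (a) for some $\mu>0$, $|K(x,y)|\le C\min\{|x-y|^{-n},|x-y|^{-n-\mu}\}$ for $x\neq y$; (b) for some $\delta>0$ and all $0<r<1$, $j\in\mathbb N$, $z\in\mathbb R^n$ and $|y-z|<r$, $$\int_{A_j(z,r)}\big(|K(x,y)-K(x,z)|+|K(y,x)-K(z,x)|\big)dx\lesssim 2^{-j\delta},$$ where $A_j(z,r)=\{x:2^jr\le|x-z|<2^{j+1}r\}$. Then for every compactly supported $g\in L^2(\mathbb R^n)$ with $\int g=0$ and every multi-index $\alpha$ with $|\alpha|<\min\{\mu,\delta\}$, the function $x\mapsto x^\alpha Tg(x)$ belongs to $L^1(\mathbb R^n)$. *)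

(* Defs.v *)
From HB Require Import structures.
From mathcomp Require Import all_boot all_order all_algebra.
From mathcomp Require Import all_classical all_reals all_analysis.

Set Implicit Arguments.
Unset Strict Implicit.
Unset Printing Implicit Defensive.
Import Order.TTheory GRing.Theory Num.Theory.
Import numFieldNormedType.Exports.

Local Open Scope classical_set_scope.
Local Open Scope ring_scope.

(* Points of R^n are n-tuples of reals ([n.-tuple R] carries the product
   (= Borel) sigma-algebra in MathComp-Analysis). *)
Section Rn.
Variable R : realType.

(* Lebesgue integral on R^n of a (nonnegative, measurable) function, defined
   as the iterated one-dimensional Lebesgue integral (the n-fold product of
   Lebesgue measure; Tonelli). *)
Fixpoint lint (n : nat) : (n.-tuple R -> \bar R) -> \bar R :=
  match n return (n.-tuple R -> \bar R) -> \bar R with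
  | 0 => fun f => f [tuple]
  | m.+1 => fun f =>
      (\int[@lebesgue_measure R]_t lint (fun y : m.-tuple R => f (cons_tuple t y)))%E
  end.

Definition sint (n : nat) (f : n.-tuple R -> R) : \bar R :=
  (lint (fun x => (Num.max (f x) 0)%:E) - lint (fun x => (Num.max (- f x) 0)%:E))%E.

Definition eucl_dist (n : nat) (x y : n.-tuple R) : R :=
  Num.sqrt (\sum_(i < n) (tnth x i - tnth y i) ^+ 2).
Definition eucl_norm (n : nat) (x : n.-tuple R) : R :=
  Num.sqrt (\sum_(i < n) tnth x i ^+ 2).

Definition inL2 (n : nat) (f : n.-tuple R -> R) : Prop :=
  measurable_fun [set: n.-tuple R] f /\ (lint (fun x => (f x ^+ 2)%:E) < +oo)%E.
Definition inL1 (n : nat) (f : n.-tuple R -> R) : Prop :=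
  measurable_fun [set: n.-tuple R] f /\ (lint (fun x => `|f x|%:E) < +oo)%E.

Definition L2norm2 (n : nat) (f : n.-tuple R -> R) : \bar R :=
  lint (fun x => (f x ^+ 2)%:E).

Definition compact_support (n : nat) (g : n.-tuple R -> R) : Prop :=
  exists M : R, forall y, M < eucl_norm y -> g y = 0.

Definition outside_support (n : nat) (g : n.-tuple R -> R) (x : n.-tuple R) : Prop :=
  exists2 r : R, 0 < r & forall y, eucl_dist x y < r -> g y = 0.

Definition annulus (n : nat) (j : nat) (z : n.-tuple R) (r : R) : set (n.-tuple R) :=
  [set x | 2 ^+ j * r <= eucl_dist x z < 2 ^+ j.+1 * r].

Definition monom (n : nat) (alpha : n.-tuple nat) (x : n.-tuple R) : R :=
  \prod_(i < n) tnth x i ^+ tnth alpha i.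
Definition mindex_size (n : nat) (alpha : n.-tuple nat) : nat :=
  \sum_(i < n) tnth alpha i.

End Rn.

(* Main.v *)
Require Import Defs.
From HB Require Import structures.
From mathcomp Require Import all_boot all_order all_algebra.
From mathcomp Require Import all_classical all_reals all_analysis.
From mathcomp Require Import measurable_realfun lra ring.
Import Order.TTheory GRing.Theory Num.Theory.
Import numFieldNormedType.Exports.
Local Open Scope classical_set_scope.
Local Open Scope ring_scope.

Section L.
Variable R : realType.
Local Notation mu := (@lebesgue_measure R).
Local Open Scope ereal_scope.

Lemma lint_ge0 n (f : n.-tuple R -> \bar R) : (forall x, 0 <= f x) -> 0 <= lint f.
Proof.
elim: n f => [|n IH] f f0 /=; first exact: f0.
by apply: integral_ge0 => t _; apply: IH => y; apply: f0.
Qed.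

Lemma measurable_cons_tuple n :
  measurable_fun [set: R * n.-tuple R] (fun p => cons_tuple p.1 p.2).
Proof. exact: (measurable_cons measurable_fst measurable_snd). Qed.

Lemma measurable_lint n : forall d (X : measurableType d)
  (F : X * n.-tuple R -> \bar R), measurable_fun [set: X * n.-tuple R] F -> (forall p, 0 <= F p) ->
  measurable_fun setT (fun x => lint (fun y => F (x, y))).
Proof.
elim: n => [|n IH] d X F mF F0 /=.
  by apply: measurableT_comp mF _; apply: measurable_fun_pair => //.
pose G (q : (X * R) * n.-tuple R) := F (q.1.1, cons_tuple q.1.2 q.2).
have mG : measurable_fun setT G.
  apply: measurableT_comp mF _; apply: measurable_fun_pair.
    exact: measurableT_comp.
  exact: (measurable_cons (f := fun q : (X * R) * n.-tuple R => q.1.2) (g := fun q => q.2) (measurableT_comp measurable_snd measurable_fst) measurable_snd).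
have mH := IH _ _ G mG (fun q => F0 _).
have H0 : forall q, 0 <= lint (fun y : n.-tuple R => G (q, y)).
  by move=> q; apply: lint_ge0 => y; apply: F0.
exact: (@measurable_fun_fubini_tonelli_F _ _ _ _ R mu _ mH H0).
Qed.


Lemma measurable_section n (f : n.+1.-tuple R -> \bar R) t :
  measurable_fun [set: n.+1.-tuple R] f ->
  measurable_fun [set: n.-tuple R] (fun y => f (cons_tuple t y)).
Proof.
move=> mf; apply: measurableT_comp mf _.
have h := measurableT_comp (measurable_cons_tuple n) (measurable_fun_pair (measurable_cst t) (@measurable_id _ (n.-tuple R) setT)).
exact: h.
Qed.

Lemma measurable_lint_cons n (f : n.+1.-tuple R -> \bar R) :
  measurable_fun [set: n.+1.-tuple R] f -> (forall x, 0 <= f x) ->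
  measurable_fun [set: R] (fun t => lint (fun y : n.-tuple R => f (cons_tuple t y))).
Proof.
move=> mf f0.
have mF : measurable_fun [set: R * n.-tuple R] (fun p => f (cons_tuple p.1 p.2)).
  by apply: measurableT_comp mf _; exact: measurable_cons_tuple.
have h := @measurable_lint n _ _ _ mF (fun p => f0 _).
exact: h.
Qed.

Lemma le_lint n (f g : n.-tuple R -> \bar R) :
  measurable_fun [set: n.-tuple R] f -> measurable_fun [set: n.-tuple R] g ->
  (forall x, 0 <= f x) -> (forall x, f x <= g x) -> lint f <= lint g.
Proof.
elim: n f g => [|n IH] f g mf mg f0 fg /=; first exact: fg.
have g0 : forall x, 0 <= g x by move=> x; exact: le_trans (f0 x) (fg x).
apply: ge0_le_integral => //.
- by move=> t _; apply: lint_ge0 => y; apply: f0.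
- exact: measurable_lint_cons.
- exact: measurable_lint_cons.
- move=> t _; apply: IH => //; try exact: measurable_section.
Qed.

Lemma lint_add n (f g : n.-tuple R -> \bar R) :
  measurable_fun [set: n.-tuple R] f -> measurable_fun [set: n.-tuple R] g ->
  (forall x, 0 <= f x) -> (forall x, 0 <= g x) ->
  lint (fun x => f x + g x) = lint f + lint g.
Proof.
elim: n f g => [|n IH] f g mf mg f0 g0 //=.
rewrite -ge0_integralD //; last 4 first.
- by move=> t _; apply: lint_ge0 => y; apply: f0.
- exact: measurable_lint_cons.
- by move=> t _; apply: lint_ge0 => y; apply: g0.
- exact: measurable_lint_cons.
apply: eq_integral => t _; apply: IH => //; try exact: measurable_section.
Qed.

Lemma lint_scale n (c : R) (f : n.-tuple R -> \bar R) : (0 <= c)%R ->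
  measurable_fun [set: n.-tuple R] f -> (forall x, 0 <= f x) ->
  lint (fun x => c%:E * f x) = c%:E * lint f.
Proof.
elim: n f => [|n IH] f c0 mf f0 //=.
rewrite -ge0_integralZl_EFin //; last 2 first.
- by move=> t _; apply: lint_ge0 => y; apply: f0.
- exact: measurable_lint_cons.
apply: eq_integral => t _; apply: IH => //; try exact: measurable_section.
Qed.


Lemma measurable_tprod n (phi : R -> R) : measurable_fun [set: R] phi ->
  measurable_fun [set: n.-tuple R] (fun x => (\prod_(i < n) phi (tnth x i))%:E).
Proof.
move=> mphi; apply/measurable_EFinP.
apply: measurable_prod => i _.
exact: measurableT_comp mphi (measurable_tnth i).
Qed.

Lemma lint_prod n (phi : R -> R) (c : R) : measurable_fun [set: R] phi ->
  (forall t, 0 <= phi t)%R -> \int[mu]_t (phi t)%:E <= c%:E ->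
  lint (fun x : n.-tuple R => (\prod_(i < n) phi (tnth x i))%:E) <= (c ^+ n)%:E.
Proof.
move=> mphi phi0 hc.
have c0 : (0 <= c)%R.
  by rewrite -lee_fin; apply: le_trans hc; apply: integral_ge0 => t _; rewrite lee_fin.
elim: n => [|n IH] /=; first by rewrite big_ord0 expr0.
have L0 : 0 <= lint (fun x : n.-tuple R => (\prod_(i < n) phi (tnth x i))%:E).
  by apply: lint_ge0 => x; rewrite lee_fin; apply: prodr_ge0 => i _.
have E : forall t, lint (fun y : n.-tuple R => (\prod_(i < n.+1) phi (tnth (cons_tuple t y) i))%:E)
   = (phi t)%:E * lint (fun x : n.-tuple R => (\prod_(i < n) phi (tnth x i))%:E).
  move=> t; rewrite -lint_scale//; last 2 first.
  - exact: measurable_tprod.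
  - by move=> x; rewrite lee_fin; apply: prodr_ge0 => i _.
  apply: congr1; apply: funext => y.
  by rewrite big_ord_recl tnth0 EFinM; under eq_bigr do rewrite tnthS.
under eq_integral do rewrite E.
rewrite ge0_integralZr//; last 2 first.
- exact/measurable_EFinP.
- by move=> t _; rewrite lee_fin.
rewrite exprS EFinM.
apply: lee_pmul => //.
by apply: integral_ge0 => t _; rewrite lee_fin.
Qed.

End L.
Arguments lint_ge0 {R n}.
Arguments le_lint {R n}.
Arguments lint_add {R n}.
Arguments lint_scale {R n}.
Arguments lint_prod {R n}.
Arguments measurable_tprod {R n}.

Section D.
Variable R : realType.
Local Notation mu := (@lebesgue_measure R).

Lemma powR_cont (q a : R) : 0 < a -> {for a, continuous (@powR R ^~ q)}.
Proof.
move=> a0; apply: differentiable_continuous; apply/derivable1_diffP.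
by apply: derivable_powR; rewrite in_itv /= andbT.
Qed.

Definition decay (p : R) (t : R) : R := (1 + `|t|) `^ (- p).

Lemma decay_ge0 p t : 0 <= decay p t.
Proof. exact: powR_ge0. Qed.

Lemma decay_cont p : continuous (decay p).
Proof.
move=> t.
rewrite (_ : decay p = (@powR R ^~ (- p)) \o (fun t : R => 1 + `|t|)) //.
apply: continuous_comp.
  apply: continuousD; [exact: cst_continuous | exact: norm_continuous].
by apply: powR_cont; have := normr_ge0 t; lra.
Qed.

Lemma decay_int (p : R) : 1 < p ->
  (\int[mu]_t (decay p t)%:E = (2 / (p - 1))%:E)%E.
Proof.
move=> p1.
rewrite ge0_symfun_integralT; last 3 first.
- exact: decay_ge0.
- exact: decay_cont.
- by move=> t; rewrite /decay /= normrN.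
rewrite -set_itvcy.
set q := 1 - p.
have q0 : q != 0 by rewrite /q; apply/eqP; lra.
pose F : R -> R := q^-1 \*: ((@powR R ^~ q) \o (cst 1 + id)).
have dF : forall x : R, 0 < x -> is_derive x 1 F (decay p x).
  move=> x x0.
  apply: is_derive_eq.
    apply: is_deriveZ; apply: is_derive1_comp.
      apply: is_derive1_powR; change (0 < 1 + x); lra.
  have -> : q - 1 = - p by rewrite /q; lra.
  rewrite /decay gtr0_norm// add0r mulr1 /=.
  by rewrite /GRing.scale /= mulrA mulVf// mul1r.
rewrite (@ge0_continuous_FTC2y _ (decay p) F 0 0); last 6 first.
- by move=> x _; exact: decay_ge0.
- exact/continuous_subspaceT/decay_cont.
- rewrite -(scaler0 _ q^-1); apply: cvgZr.
  apply/cvgrPdist_lt => e e0.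
  have qn : q < 0 by rewrite /q; lra.
  set X := expR (ln e / q).
  have X0 : 0 < X by apply: expR_gt0.
  near=> x.
  have xX : X < x by near: x; apply: nbhs_pinfty_gt; apply: num_real.
  have x1 : 0 < 1 + x by lra.
  rewrite /= sub0r normrN ger0_norm; last exact: powR_ge0.
  rewrite /powR gt_eqF //.
  rewrite -[X in _ < X](lnK (x := e)); last by rewrite posrE.
  rewrite ltr_expR.
  have h1 : ln e / q < ln (1 + x).
    rewrite -[ln e / q]expRK -/X ltr_ln ?posrE //; lra.
  have h2 : q * (ln e / q) = ln e by rewrite mulrC divfK.
  rewrite mulrC; nra.
- by move=> x x0; have [] := dF x x0.
- apply: cvg_at_right_filter.
  apply: continuousZl_tmp; apply: continuous_comp.
    apply: continuousD; [exact: cst_continuous | by move=> ? ; exact: cvg_id].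
  by apply: powR_cont; change (0 < 1 + (0:R)); lra.
- move=> x; rewrite in_itv /= andbT => x0.
  by rewrite derive1E; have [_ ->] := dF x x0.
have -> : F 0 = q^-1.
  rewrite /F /GRing.scale /=.
  have -> : (cst 1 + id) (0:R) = 1 + 0 by []. rewrite addr0.
  by rewrite powR1 /GRing.scale /= mulr1.
rewrite sub0e -EFinN -EFinM; congr (_%:E).
rewrite /q; field; apply/andP; split; apply/eqP; lra.
Unshelve. all: end_near. Qed.
End D.
Arguments decay {R}.
Arguments decay_int {R}.
Arguments decay_cont {R}.
Arguments decay_ge0 {R}.

Section C.
Variable R : realType.
Local Notation mu := (@lebesgue_measure R).

Lemma fin_bounds (a : \bar R) (B : R) : (0 <= a)%E -> (a <= B%:E)%E ->
  exists r : R, a = r%:E /\ 0 <= r <= B.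
Proof.
case: a => [r| |] //= r0 rB; exists r; split => //.
by rewrite -!lee_fin r0 rB.
Qed.

Lemma sint_bound n (f h : n.-tuple R -> R) (B v : R) :
  measurable_fun [set: n.-tuple R] f -> measurable_fun [set: n.-tuple R] h ->
  (forall y, `|f y| <= h y) -> (lint (fun y => (h y)%:E) <= B%:E)%E ->
  v%:E = sint f -> `|v| <= B.
Proof.
move=> mf mh fh hB; rewrite /sint.
have mh' : measurable_fun [set: n.-tuple R] (fun y => (h y)%:E) by exact/measurable_EFinP.
have mP : measurable_fun [set: n.-tuple R] (fun y => (Num.max (f y) 0)%:E).
  by apply/measurable_EFinP; apply: measurable_maxr.
have mN : measurable_fun [set: n.-tuple R] (fun y => (Num.max (- f y) 0)%:E).
  apply/measurable_EFinP; apply: measurable_maxr => //.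
  by apply: measurableT_comp => //.
have [a [-> /andP[a0 aB]]] : exists r : R, lint (fun y => (Num.max (f y) 0)%:E) = r%:E /\ 0 <= r <= B.
  apply: fin_bounds; first by apply: lint_ge0 => y; rewrite lee_fin le_max lexx orbT.
  apply: le_trans hB; apply: le_lint => // y; first by rewrite lee_fin le_max lexx orbT.
  rewrite lee_fin; apply: le_trans (fh y); rewrite ge_max normr_ge0 andbT; exact: ler_norm.
have [b [-> /andP[b0 bB]]] : exists r : R, lint (fun y => (Num.max (- f y) 0)%:E) = r%:E /\ 0 <= r <= B.
  apply: fin_bounds; first by apply: lint_ge0 => y; rewrite lee_fin le_max lexx orbT.
  apply: le_trans hB; apply: le_lint => // y; first by rewrite lee_fin le_max lexx orbT.
  rewrite lee_fin; apply: le_trans (fh y); rewrite ge_max normr_ge0 andbT -normrN; exact: ler_norm.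
move=> hv; have {}hv : v = a - b by apply: EFin_inj; rewrite hv EFinB.
rewrite hv.
rewrite ler_norml; apply/andP; split; lra.
Qed.

Lemma sq_le_sum n (u : 'I_n -> R) i : u i ^+ 2 <= \sum_(j < n) u j ^+ 2.
Proof.
rewrite (bigD1 i) //= lerDl; apply: sumr_ge0 => j _; exact: sqr_ge0.
Qed.

Lemma abs_le_sqrt n (u : 'I_n -> R) i : `|u i| <= Num.sqrt (\sum_(j < n) u j ^+ 2).
Proof.
rewrite -sqrtr_sqr ler_sqrt ?sq_le_sum //.
by apply: sumr_ge0 => j _; exact: sqr_ge0.
Qed.

Lemma coord_le_norm n (x : n.-tuple R) i : `|tnth x i| <= eucl_norm x.
Proof. exact: (@abs_le_sqrt n (fun j => tnth x j)). Qed.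

Lemma coord_le_dist n (x y : n.-tuple R) i : `|tnth x i - tnth y i| <= eucl_dist x y.
Proof. exact: (@abs_le_sqrt n (fun j => tnth x j - tnth y j)). Qed.


Lemma powR_anti (a b s : R) : 0 < a -> a <= b -> 0 <= s -> b `^ (- s) <= a `^ (- s).
Proof.
move=> a0 ab s0; rewrite !powRN lef_pV2 ?posrE ?powR_gt0 //; last exact: lt_le_trans ab.
by apply: ge0_ler_powR => //; rewrite nnegrE ltW // (lt_le_trans a0).
Qed.

Lemma dist_ge (a b : R) : `|a| - `|b| <= `|a - b|.
Proof. have := ler_normD (a - b) b; rewrite subrK; lra. Qed.

Lemma eucl_dist_xx n (x : n.-tuple R) : eucl_dist x x = 0.
Proof.
rewrite /eucl_dist big1 ?sqrtr0 // => i _; by rewrite subrr expr0n.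
Qed.

Lemma tail_bound n (K : n.-tuple R -> n.-tuple R -> R) (g u : n.-tuple R -> R)
  (CK mu0 M Lg : R) (x : n.-tuple R) (k : 'I_n) :
  0 <= M -> 0 <= mu0 ->
  (forall x y, x != y ->
     `|K x y| <= CK * Num.min (eucl_dist x y `^ (- n%:R))
                             (eucl_dist x y `^ (- (n%:R + mu0)))) ->
  (forall y, M < eucl_norm y -> g y = 0) ->
  measurable_fun [set: n.-tuple R] g ->
  measurable_fun [set: n.-tuple R] (K x) ->
  (outside_support g x -> (u x)%:E = sint (fun y => K x y * g y)) ->
  (lint (fun y => (`|g y|)%:E) <= Lg%:E)%E ->
  2 * M + 1 < `|tnth x k| ->
  `|u x| <= Num.max CK 0 * (`|tnth x k| / 2) `^ (- (n%:R + mu0)) * Lg.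
Proof.
move=> M0 mu00 hK hg mg mK hrep hL hm.
set m := `|tnth x k| in hm *.
have os : outside_support g x.
  exists 1 => // y dy; apply: hg.
  apply: lt_le_trans _ (@coord_le_norm _ y k).
  have := @coord_le_dist _ x y k; have := dist_ge (tnth x k) (tnth y k).
  rewrite -/m; lra.
have m2 : 0 < m / 2 by lra.
set c := Num.max CK 0 * (m / 2) `^ (- (n%:R + mu0)).
have c0 : 0 <= c by rewrite /c mulr_ge0 ?powR_ge0 // le_max lexx orbT.
rewrite -/c.
apply: (@sint_bound _ _ (fun y => c * `|g y|)) (hrep os).
- exact: measurable_funM.
- apply: measurable_funM => //; exact: measurableT_comp.
- move=> y; rewrite normrM.
  have [gy0|gy0] := eqVneq (g y) 0; first by rewrite gy0 normr0 !mulr0.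
  apply: ler_wpM2r => //.
  have yM : eucl_norm y <= M.
    by rewrite leNgt; apply/negP => /hg hy; move/eqP: gy0.
  have yk := le_trans (@coord_le_norm _ y k) yM.
  have dxy : m / 2 <= eucl_dist x y.
    have := @coord_le_dist _ x y k; have := dist_ge (tnth x k) (tnth y k).
    rewrite -/m; lra.
  have d0 : 0 < eucl_dist x y by lra.
  have xy : x != y by apply/eqP => exy; rewrite exy eucl_dist_xx ltxx in d0.
  apply: le_trans (hK _ _ xy) _.
  have mx0 : 0 <= Num.max CK 0 by rewrite le_max lexx orbT.
  apply: (@le_trans _ _ (Num.max CK 0 * Num.min (eucl_dist x y `^ (- n%:R))
                             (eucl_dist x y `^ (- (n%:R + mu0))))).
    by apply: ler_wpM2r; rewrite ?le_max ?lexx // le_min !powR_ge0.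
  rewrite /c; apply: ler_wpM2l => //.
  rewrite ge_min; apply/orP; right.
  by apply: powR_anti => //; rewrite addr_ge0.
- rewrite (_ : (fun y => (c * `|g y|)%:E) = (fun y => (c%:E * (`|g y|)%:E)%E)); last first.
    by apply: funext => y; rewrite EFinM.
  rewrite lint_scale //; last by apply/measurable_EFinP; exact: measurableT_comp.
  rewrite EFinM; apply: (lee_wpmul2l _ hL); by rewrite lee_fin.
Qed.


Lemma prod_const_ord n (c : R) : \prod_(i < n) c = c ^+ n.
Proof.
elim: n => [|n IH]; first by rewrite big_ord0 expr0.
by rewrite big_ord_recr /= IH exprSr.
Qed.

Lemma monom_bound n (alpha : n.-tuple nat) (x : n.-tuple R) (m : R) :
  (forall j, `|tnth x j| <= m) -> `|monom alpha x| <= m ^+ mindex_size alpha.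
Proof.
move=> hm; rewrite /monom normr_prod /mindex_size -prodrXr.
apply: ler_prod => j _; rewrite normrX exprn_ge0 ?normr_ge0 //=.
by apply: lerXn2r; rewrite ?nnegrE ?normr_ge0 ?(le_trans _ (hm j)) ?normr_ge0.
Qed.

Lemma decay_prod_ge n (p w : R) (x : n.-tuple R) : 0 <= p ->
  (forall j, 1 + `|tnth x j| <= w) ->
  (w `^ (- p)) ^+ n <= \prod_(j < n) decay p (tnth x j).
Proof.
move=> p0 hw; rewrite -prod_const_ord.
apply: ler_prod => j _; rewrite powR_ge0 /=.
apply: powR_anti => //; have := normr_ge0 (tnth x j); lra.
Qed.

End C.
Arguments coord_le_norm {R n}.
Arguments coord_le_dist {R n}.
Arguments tail_bound {R n}.
Arguments monom_bound {R n}.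
Arguments decay_prod_ge {R n}.

Section D.
Variable R : realType.
Local Notation mu := (@lebesgue_measure R).

Definition psi (R0 : R) (t : R) : R := \1_(`[- R0, R0]) t.

Lemma psiE R0 t : psi R0 t = if `|t| <= R0 then 1 else 0.
Proof.
rewrite /psi indicE; case: ifPn => h.
  by rewrite mem_set //= in_itv /= -ler_norml.
by rewrite memNset //= in_itv /= -ler_norml; apply/negP.
Qed.

Lemma measurable_psi R0 : measurable_fun [set: R] (psi R0).
Proof. by apply: measurable_indic. Qed.

Lemma int_psi R0 : 0 <= R0 -> (\int[mu]_t (psi R0 t)%:E = (R0 *+ 2)%:E)%E.
Proof.
move=> R00; rewrite /psi integral_indic // setIT.
have := @lebesgue_measure_itv R `[- R0, R0]; move=> /= ->.
rewrite lte_fin; case: ifPn => h.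
  by rewrite -EFinB opprK mulr2n.
have -> : R0 = 0 by move: h; rewrite -real_leNgt ?num_real //; lra.
by rewrite mul0rn.
Qed.

Lemma abs_le_1sq (t : R) : `|t| <= 1 + t ^+ 2.
Proof.
have h := sqr_ge0 (`|t| - 1).
rewrite -real_normK ?num_real //; nra.
Qed.

Lemma fin_lt (a : \bar R) : (0 <= a)%E -> (a < +oo)%E -> exists r : R, a = r%:E /\ 0 <= r.
Proof. by case: a => [r| |] //= r0 _; exists r; split => //; rewrite -lee_fin. Qed.


Lemma tail_arith (m s a p : R) (N n : nat) :
  1 <= m -> p * n%:R = a -> a = s - N%:R ->
  m ^+ N * (m / 2) `^ (- s) <= (4^-1) `^ (- s) * ((2 * m) `^ (- p)) ^+ n.
Proof.
move=> m1 hp ha.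
set w := 2 * m.
have w0 : 0 < w by rewrite /w; lra.
have -> : m / 2 = w * 4^-1 by rewrite /w; field.
have w0' : 0 <= w by exact: ltW.
rewrite powRM // ?invr_ge0 //.
apply: (@le_trans _ _ (w ^+ N * (w `^ (- s) * 4^-1 `^ (- s)))).
  apply: ler_wpM2r; first by rewrite mulr_ge0 ?powR_ge0.
  apply: lerXn2r; rewrite ?nnegrE /w; lra.
rewrite mulrA [X in _ <= X]mulrC; apply: ler_wpM2r; first exact: powR_ge0.
rewrite -powR_mulrn // -powRD; last by apply/implyP => _; rewrite gt_eqF.
rewrite -powR_mulrn ?powR_ge0 // -powRrM.
have -> : N%:R + - s = - p * n%:R by rewrite mulNr hp ha; ring.
by [].
Qed.

End D.
Arguments psi {R}.
Arguments psiE {R}.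
Arguments measurable_psi {R}.
Arguments int_psi {R}.
Arguments tail_arith {R}.
Arguments abs_le_1sq {R}.
Arguments fin_lt {R}.

Theorem proposition5p2 (R : realType) (n : nat)
  (T : (n.-tuple R -> R) -> (n.-tuple R -> R))
  (K : n.-tuple R -> n.-tuple R -> R) (mu delta : R) :
  (forall (f g : n.-tuple R -> R) (a b : R), inL2 f -> inL2 g ->
     L2norm2 (fun x => T (fun y => a * f y + b * g y) x - (a * T f x + b * T g x))
       = 0%E) ->
  (exists C : R, forall g : n.-tuple R -> R, inL2 g ->
     inL2 (T g) /\ (L2norm2 (T g) <= C%:E * L2norm2 g)%E) ->
  measurable_fun [set: n.-tuple R * n.-tuple R] (fun p => K p.1 p.2) ->
  (forall (M r : R), 0 < r ->
     (lint (fun x => lint (fun y =>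
        (if [&& eucl_norm x <= M, eucl_norm y <= M & r <= eucl_dist x y]
         then `|K x y| else 0)%:E)) < +oo)%E) ->
  (forall (g : n.-tuple R -> R), inL2 g -> compact_support g ->
     forall x, outside_support g x -> (T g x)%:E = sint (fun y => K x y * g y)) ->
  0 < mu ->
  (exists C : R, forall x y, x != y ->
     `|K x y| <= C * Num.min (eucl_dist x y `^ (- n%:R))
                             (eucl_dist x y `^ (- (n%:R + mu)))) ->
  0 < delta ->
  (exists C : R, forall (r : R), 0 < r < 1 -> forall (j : nat), (0 < j)%N ->
     forall z y : n.-tuple R, eucl_dist y z < r ->
       (lint (fun x => ((\1_(annulus j z r) x) *
           (`|K x y - K x z| + `|K y x - K z x|))%:E)
         <= (C * 2 `^ (- (j%:R * delta)))%:E)%E) ->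
  forall (g : n.-tuple R -> R), inL2 g -> compact_support g -> sint g = 0%E ->
  forall alpha : n.-tuple nat, (mindex_size alpha)%:R < Num.min mu delta ->
    inL1 (fun x => monom alpha x * T g x).
Proof.
move=> _ [CT hT] mK _ hrep mu0 [CK hK] _ _ g g2 csg _ alpha hal.
have [mg g2f] := g2.
have [mu_ u2f] := (hT g g2).1.
set u := T g in mu_ u2f *.
case: csg => M0 hg0.
set M := Num.max M0 0.
have M0' : 0 <= M by rewrite le_max lexx orbT.
have hg : forall y, M < eucl_norm y -> g y = 0.
  by move=> y hy; apply: hg0; apply: le_lt_trans hy; rewrite le_max lexx.
set R0 := 2 * M + 1.
have R00 : 0 <= R0 by rewrite /R0; lra.
set c := fun x : n.-tuple R => \prod_(j < n) psi R0 (tnth x j).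
have mc : measurable_fun [set: n.-tuple R] c.
  apply: measurable_prod => j _; apply: measurableT_comp (measurable_psi R0) _.
  exact: measurable_tnth.
have c_in : forall x, (forall j, `|tnth x j| <= R0) -> c x = 1.
  by move=> x hx; rewrite /c big1 // => j _; rewrite psiE hx.
have c_out : forall x (j : 'I_n), R0 < `|tnth x j| -> c x = 0.
  move=> x j hj; rewrite /c (bigD1 j) //= psiE.
  by rewrite leNgt hj mul0r.
have c01 : forall x, 0 <= c x.
  by move=> x; apply: prodr_ge0 => j _; rewrite psiE; case: ifP.
have intc : (lint (fun x => (c x)%:E) <= ((R0 *+ 2) ^+ n)%:E)%E.
  apply: lint_prod; first exact: measurable_psi.
    by move=> t; rewrite psiE; case: ifP.
  by rewrite int_psi.
have L20 : (0 <= lint (fun x => (g x ^+ 2)%:E))%E.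
  by apply: lint_ge0 => x; rewrite lee_fin sqr_ge0.
have [G2 [hG2 G20]] := fin_lt _ L20 g2f.
set Lg := (R0 *+ 2) ^+ n + G2.
have mg2 : measurable_fun [set: n.-tuple R] (fun y => g y ^+ 2) by exact: measurable_funX.
have hLg : (lint (fun y => (`|g y|)%:E) <= Lg%:E)%E.
  apply: (@le_trans _ _ (lint (fun y => (c y + g y ^+ 2)%:E))).
    apply: le_lint.
    - by apply/measurable_EFinP; exact: measurableT_comp.
    - by apply/measurable_EFinP; exact: measurable_funD.
    - by move=> y; rewrite lee_fin.
    move=> y; rewrite lee_fin.
    have [gy0|gy0] := eqVneq (g y) 0.
      by rewrite gy0 normr0 addr_ge0 ?sqr_ge0.
    have yM : eucl_norm y <= M.
      by rewrite leNgt; apply/negP => /hg hy; move/eqP: gy0.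
    rewrite c_in; first exact: abs_le_1sq.
    move=> j; apply: le_trans (coord_le_norm _ j) _; apply: le_trans yM _.
    rewrite /R0; lra.
  rewrite (_ : (fun y => (c y + g y ^+ 2)%:E) = (fun y => ((c y)%:E + (g y ^+ 2)%:E)%E)); last first.
    by apply: funext => y; rewrite EFinD.
  rewrite lint_add //; first last.
  all: try (by move=> y; rewrite lee_fin ?sqr_ge0).
  all: try exact/measurable_EFinP.
  by rewrite hG2 /Lg EFinD leeD2r.
set s := n%:R + mu.
set N := mindex_size alpha.
set a := s - N%:R.
have hN : N%:R < mu by apply: lt_le_trans hal _; rewrite ge_min lexx.
have n0 : 0 <= n%:R :> R by [].
set p := if n == 0%N then 2 else a / n%:R.
have p1 : 1 < p.
  rewrite /p; case: eqP => [_|/eqP nz]; first lra.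
  have nP : 0 < n%:R :> R by rewrite ltr0n lt0n.
  by rewrite ltr_pdivlMr // mul1r /a /s; lra.
set cK := Num.max CK 0.
have cK0 : 0 <= cK by rewrite le_max lexx orbT.
set c4 := 4^-1 `^ (- s) : R.
have c40 : 0 <= c4 by apply: powR_ge0.
have Lg0 : 0 <= Lg by rewrite /Lg addr_ge0 // exprn_ge0 // mulrn_wge0.
set D := cK * Lg * c4.
have D0 : 0 <= D by rewrite /D !mulr_ge0.
set B0 := R0 ^+ N.
have B00 : 0 <= B0 by rewrite exprn_ge0.
set P := fun x : n.-tuple R => \prod_(j < n) decay p (tnth x j).
have P0 : forall x, 0 <= P x by move=> x; apply: prodr_ge0 => j _; apply: decay_ge0.
set h := fun x => B0 * (c x + c x * u x ^+ 2) + D * P x.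
have hpt : forall x, `|monom alpha x * u x| <= h x.
  move=> x; rewrite normrM /h.
  case: (pselect (forall j, `|tnth x j| <= R0)) => hx.
    rewrite c_in // mul1r.
    rewrite -[X in X <= _]addr0; apply: lerD; last by rewrite mulr_ge0.
    apply: ler_pM; rewrite ?normr_ge0 //; first exact: monom_bound.
    exact: abs_le_1sq.
  have [j0 hj0] : exists j0, R0 < `|tnth x j0|.
    have [j0 /negP hj] : exists j0, ~ (`|tnth x j0| <= R0) by apply/existsNP.
    by exists j0; rewrite ltNge.
  rewrite (c_out x j0 hj0) mul0r addr0 mulr0 add0r.
  case: (@arg_maxP _ _ _ j0 predT (fun j => `|tnth x j|)) => // k _ hk.
  set m := `|tnth x k|.
  have hm : R0 < m := lt_le_trans hj0 (hk j0 isT).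
  have mK' : measurable_fun [set: n.-tuple R] (K x).
    have := measurableT_comp mK (measurable_fun_pair (measurable_cst x) (@measurable_id _ (n.-tuple R) setT)).
    by [].
  have hu := tail_bound K g u CK mu M Lg x k M0' (ltW mu0) hK hg mg mK'
    (hrep g g2 (ex_intro _ M0 hg0) x) hLg hm.
  have hmon := monom_bound alpha x m (fun j => hk j isT).
  have m1 : 1 <= m by rewrite /R0 in hm; lra.
  have nz : n != 0%N by rewrite -lt0n; exact: leq_ltn_trans (leq0n j0) (ltn_ord j0).
  have hpa : p * n%:R = a by rewrite /p ifF ?divfK // ?pnatr_eq0 //; apply/negbTE.
  have hta := tail_arith m s a p N n m1 hpa erefl.
  have hdp : (2 * m) `^ (- p) ^+ n <= P x.
    apply: decay_prod_ge; first by lra.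
    by move=> j; have /= := hk j isT; rewrite -/m; lra.
  apply: le_trans (ler_pM (normr_ge0 _) (normr_ge0 _) hmon hu) _.
  rewrite (_ : m ^+ N * (cK * (m / 2) `^ (- s) * Lg) = (cK * Lg) * (m ^+ N * (m / 2) `^ (- s))); last by ring.
  have -> : D * P x = (cK * Lg) * (c4 * P x) by rewrite /D; ring.
  apply: ler_wpM2l; first by rewrite mulr_ge0.
  by apply: le_trans hta _; apply: ler_wpM2l.
have mmon : measurable_fun [set: n.-tuple R] (monom alpha).
  apply: measurable_prod => i _; apply: measurable_funX.
  exact: measurable_tnth.
have mdec : measurable_fun [set: R] (decay p).
  exact: continuous_measurable_fun (decay_cont p).
have mP : measurable_fun [set: n.-tuple R] P.
  apply: measurable_prod => j _; apply: measurableT_comp mdec _.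
  exact: measurable_tnth.
have mu2 : measurable_fun [set: n.-tuple R] (fun x => u x ^+ 2) by exact: measurable_funX.
have mcu : measurable_fun [set: n.-tuple R] (fun x => c x * u x ^+ 2) by exact: measurable_funM.
have c1 : forall x, c x <= 1.
  move=> x; case: (pselect (forall j, `|tnth x j| <= R0)) => hx; first by rewrite c_in.
  have [j0 /negP hj] : exists j0, ~ (`|tnth x j0| <= R0) by apply/existsNP.
  by rewrite (c_out x j0) // ltNge.
have U0 : (0 <= lint (fun x => (u x ^+ 2)%:E))%E.
  by apply: lint_ge0 => x; rewrite lee_fin sqr_ge0.
have [U2 [hU2 U20]] := fin_lt _ U0 u2f.
have hP : (lint (fun x => (P x)%:E) <= ((2 / (p - 1)) ^+ n)%:E)%E.
  apply: lint_prod => //; first exact: decay_ge0.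
  by rewrite decay_int.
have hcu : (lint (fun x => (c x * u x ^+ 2)%:E) <= U2%:E)%E.
  rewrite -hU2; apply: le_lint.
  - exact/measurable_EFinP.
  - exact/measurable_EFinP.
  - by move=> x; rewrite lee_fin mulr_ge0 ?sqr_ge0.
  - move=> x; rewrite lee_fin -[X in _ <= X]mul1r; apply: ler_wpM2r; first exact: sqr_ge0.
    exact: c1.
split; first exact: measurable_funM.
apply: (@le_lt_trans _ _ (lint (fun x => (h x)%:E))).
  apply: le_lint.
  - apply/measurable_EFinP; apply: measurableT_comp => //; exact: measurable_funM.
  - apply/measurable_EFinP; apply: measurable_funD; apply: measurable_funM => //.
    exact: measurable_funD.
  - by move=> x; rewrite lee_fin.
  - by move=> x; rewrite lee_fin.
rewrite (_ : (fun x => (h x)%:E) = (fun x => (B0%:E * ((c x)%:E + (c x * u x ^+ 2)%:E) + D%:E * (P x)%:E)%E)); last first.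
  by apply: funext => x; rewrite /h EFinD !EFinM EFinD.
have mcE : measurable_fun [set: n.-tuple R] (fun x => (c x)%:E) by exact/measurable_EFinP.
have mcuE : measurable_fun [set: n.-tuple R] (fun x => (c x * u x ^+ 2)%:E) by exact/measurable_EFinP.
have mPE : measurable_fun [set: n.-tuple R] (fun x => (P x)%:E) by exact/measurable_EFinP.
have cu0 : forall x, (0 <= (c x * u x ^+ 2)%:E)%E by move=> x; rewrite lee_fin mulr_ge0 ?sqr_ge0.
have c0E : forall x, (0 <= (c x)%:E)%E by move=> x; rewrite lee_fin.
rewrite lint_add; last 4 first.
- apply: emeasurable_funM => //; exact: emeasurable_funD.
- exact: emeasurable_funM.
- by move=> x; apply: mule_ge0; [rewrite lee_fin | apply: adde_ge0].
- by move=> x; apply: mule_ge0; rewrite lee_fin.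
rewrite (lint_scale B0) //; last 2 first.
- exact: emeasurable_funD.
- by move=> x; rewrite adde_ge0.
rewrite (lint_scale D) //.
rewrite lint_add //.
apply: (@le_lt_trans _ _ (B0%:E * ((R0 *+ 2) ^+ n + U2)%:E + D%:E * ((2 / (p - 1)) ^+ n)%:E)%E); last first.
  by rewrite -!EFinM -EFinD ltry.
apply: leeD; apply: lee_wpmul2l; rewrite ?lee_fin //.
by rewrite EFinD; apply: leeD.
Qed.
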